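(* Let $\alpha\in(0,1)$ and $\eta>0$, and run the generalized share algorithm with the projection mixing rule $\hat p_{t+1}\in\arg\min_{x\in\Delta_d^\alpha}\mathcal K(x,v_{t+1})$. Then for all $T\ge1$, all loss vectors $\ell_1,\dots,\ell_T\in[0,1]^d$, and all $u_1,\dots,u_T\in\mathbb R_+^d$, \[ \sum_{t=1}^T\|u_t\|_1\,\hat p_t^\top\ell_t-\sum_{t=1}^T u_t^\top\ell_t\le \frac{\|u_1\|_1\ln d}{\eta}+\frac{m(u_1^T)}{\eta}\ln\frac{d}{\alpha}+\Big(\frac{\eta}{8}+\alpha\Big)\sum_{t=1}^T\|u_t\|_1 . \]
   Context: Let $d\ge1$ and $\Delta_d=\{q\in[0,1]^d:\sum_{i=1}^d q_i=1\}$. The generalized share algorithm with learning rate $\eta>0$ and mixing functions $\psi_t:[0,1]^{td}\to\Delta_d$ ($t\ge2$) works as follows: $\hat p_1=v_1=(1/d,\dots,1/d)$. At each round $t=1,2,\dots$ it predicts $\hat p_t=(\hat p_{1,t},\dots,\hat p_{d,t})\in\Delta_d$, observes a loss vector $\ell_t=(\ell_{1,t},\dots,\ell_{d,t})\in[0,1]^d$ (arbitrary), and suffers loss $\hat p_t^\top\ell_t$. It then forms the pre-weights $v_{j,t+1}=\hat p_{j,t}e^{-\eta\ell_{j,t}}/\sum_{i=1}^d\hat p_{i,t}e^{-\eta\ell_{i,t}}$ for $j=1,\dots,d$, sets $v_{t+1}=(v_{1,t+1},\dots,v_{d,t+1})$, and defines $\hat p_{t+1}=\psi_{t+1}(V_{t+1})$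 where $V_{t+1}=[v_{i,s}]_{1\le i\le d,1\le s\le t+1}$ is the $d\times(t+1)$ matrix of all pre-weights so far. Here $\Delta_d^\alpha=[\alpha/d,1]^d\cap\Delta_d$ and $\mathcal K(x,v)=\sum_{i=1}^d x_i\ln(x_i/v_i)$ is the Kullback–Leibler divergence. For $x,y\in\mathbb R_+^d$, $D_{\mathrm{TV}}(x,y)=\sum_{i:\,x_i\ge y_i}(x_i-y_i)$, and for $u_1,\dots,u_T\in\mathbb R_+^d$, $m(u_1^T)=\sum_{t=2}^T D_{\mathrm{TV}}(u_t,u_{t-1})$. *)

(* Defs.v *)
From Stdlib Require Import Reals.
Open Scope R_scope.

(* Vectors in R^d are functions nat -> R; only indices 0..d-1 matter. *)
Fixpoint rsum (n : nat) (f : nat -> R) : R :=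
  match n with
  | O => 0
  | S k => rsum k f + f k
  end.

Definition simplex (d : nat) (x : nat -> R) : Prop :=
  (forall i, (i < d)%nat -> 0 <= x i <= 1) /\ rsum d x = 1.

Definition simplex_alpha (d : nat) (alpha : R) (x : nat -> R) : Prop :=
  simplex d x /\ (forall i, (i < d)%nat -> alpha / INR d <= x i /\ x i <= 1).

Definition KL (d : nat) (x v : nat -> R) : R :=
  rsum d (fun i => x i * ln (x i / v i)).

Definition dot (d : nat) (x y : nat -> R) : R := rsum d (fun i => x i * y i).

Definition norm1 (d : nat) (x : nat -> R) : R := rsum d (fun i => Rabs (x i)).

Definition preweight (d : nat) (eta : R) (p l : nat -> R) : nat -> R :=
  fun j => p j * exp (- eta * l j) / rsum d (fun i => p i * exp (- eta * l i)).

Definition is_KL_projection (d : nat) (alpha : R) (v x : nat -> R) : Prop :=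
  simplex_alpha d alpha x /\
  forall y, simplex_alpha d alpha y -> KL d x v <= KL d y v.

Definition DTV (d : nat) (x y : nat -> R) : R :=
  rsum d (fun i => if Rle_dec (y i) (x i) then x i - y i else 0).

(* m(u_1^T) = sum_{t=2}^T D_TV(u_t, u_{t-1}); u indexed by t >= 1 *)
Definition shifts (d T : nat) (u : nat -> nat -> R) : R :=
  rsum (T - 1) (fun k => DTV d (u (k + 2)%nat) (u (k + 1)%nat)).

Definition sumT (T : nat) (f : nat -> R) : R := rsum T (fun k => f (S k)).

(* Main.v *)
Require Import Defs.
From Stdlib Require Import Reals Lra Lia.
From Coquelicot Require Import Coquelicot.
Open Scope R_scope.

Lemma rsum_ext n f g : (forall i, (i < n)%nat -> f i = g i) -> rsum n f = rsum n g.
Proof. induction n; simpl; intros H; auto. rewrite IHn by (intros; apply H; lia). rewrite H by lia. auto. Qed.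
Lemma rsum_le n f g : (forall i, (i < n)%nat -> f i <= g i) -> rsum n f <= rsum n g.
Proof. induction n; simpl; intros H. lra. pose proof (H n ltac:(lia)). pose proof (IHn ltac:(intros; apply H; lia)). lra. Qed.
Lemma rsum_plus n f g : rsum n (fun i => f i + g i) = rsum n f + rsum n g.
Proof. induction n; simpl. ring. rewrite IHn; ring. Qed.
Lemma rsum_minus n f g : rsum n (fun i => f i - g i) = rsum n f - rsum n g.
Proof. induction n; simpl. ring. rewrite IHn; ring. Qed.
Lemma rsum_scal n c f : rsum n (fun i => c * f i) = c * rsum n f.
Proof. induction n; simpl. ring. rewrite IHn; ring. Qed.
Lemma rsum_const n c : rsum n (fun _ => c) = INR n * c.
Proof. induction n; cbn [rsum]. simpl; ring. rewrite IHn, S_INR; ring. Qed.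
Lemma rsum_nonneg n f : (forall i, (i < n)%nat -> 0 <= f i) -> 0 <= rsum n f.
Proof. intros H. rewrite <- (Rmult_0_r (INR n)), <- rsum_const. apply rsum_le. auto. Qed.
Lemma rsum_le_elem n f j : (forall i, (i < n)%nat -> 0 <= f i) -> (j < n)%nat -> f j <= rsum n f.
Proof. induction n; simpl; intros H Hj. lia.
  assert (0 <= rsum n f) by (apply rsum_nonneg; intros; apply H; lia).
  destruct (Nat.eq_dec j n). subst. pose proof (H n ltac:(lia)). lra.
  pose proof (IHn ltac:(intros; apply H; lia) ltac:(lia)). pose proof (H n ltac:(lia)). lra. Qed.

Lemma exp_convex l a : 0 <= l <= 1 -> exp (a * l) <= 1 - l + l * exp a.
Proof.
  intros Hl. set (s := a * l).
  pose proof (exp_ineq1_le (0 - s)) as H1. pose proof (exp_ineq1_le (a - s)) as H2.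
  assert (E1 : exp 0 = exp s * exp (0 - s)) by (rewrite <- exp_plus; f_equal; ring).
  assert (E2 : exp a = exp s * exp (a - s)) by (rewrite <- exp_plus; f_equal; ring).
  rewrite exp_0 in E1. pose proof (exp_pos s).
  assert (exp s * (1 + (0 - s)) <= 1) by (rewrite E1; apply Rmult_le_compat_l; lra).
  assert (exp s * (1 + (a - s)) <= exp a) by (rewrite E2; apply Rmult_le_compat_l; lra).
  assert (exp s = (1 - l) * (exp s * (1 + (0 - s))) + l * (exp s * (1 + (a - s)))).
  { unfold s. ring. }
  nra.
Qed.

Lemma mono_deriv (f df : R -> R) :
  (forall x, is_derive f x (df x)) -> (forall x, 0 <= x -> 0 <= df x) ->
  forall a b, 0 <= a -> a <= b -> f a <= f b.
Proof.
  intros Hd Hp a b Ha Hab.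
  destruct (Req_dec a b) as [->|Hne]; [lra|].
  destruct (MVT_gen f a b df) as [c [Hc Heq]].
  - intros x _; apply Hd.
  - intros x _. apply derivable_continuous_pt. exists (df x).
    apply is_derive_Reals; apply Hd.
  - rewrite Rmin_left in Hc by lra. rewrite Rmax_right in Hc by lra.
    assert (0 <= df c) by (apply Hp; lra).
    assert (0 <= df c * (b - a)) by (apply Rmult_le_pos; lra). lra.
Qed.

Section H.
Variable m : R.
Hypothesis Hm : 0 <= m <= 1.
Definition D x := 1 - m + m * exp (- x).
Lemma D_pos x : 0 < D x.
Proof. unfold D. pose proof (exp_pos (-x)).
  destruct (Req_dec m 0). subst; lra. assert (0 < m * exp (-x)) by (apply Rmult_lt_0_compat; lra). lra. Qed.
Definition F1 x := x / 4 - m + m * exp (- x) / D x.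
Definition F x := x * x / 8 - m * x - ln (D x).
Lemma F_der x : is_derive F x (F1 x).
Proof.
  pose proof (D_pos x). unfold F, F1, D in *.
  auto_derive. lra. field. lra.
Qed.
Lemma F1_der x : is_derive F1 x (/4 - m * exp (-x) * (1 - m) / (D x * D x)).
Proof.
  pose proof (D_pos x). unfold F1, D in *.
  auto_derive; [lra|]. field. lra.
Qed.
Lemma F1_nonneg x : 0 <= x -> 0 <= F1 x.
Proof.
  intros Hx. replace 0 with (F1 0) at 1.
  2:{ unfold F1, D. rewrite Ropp_0, exp_0. field. lra. }
  apply (mono_deriv F1 _ F1_der); try lra.
  intros y _. pose proof (D_pos y). pose proof (exp_pos (-y)).
  assert (m * exp (- y) * (1 - m) / (D y * D y) <= /4).
  { apply (Rmult_le_reg_r (D y * D y)). nra.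
    unfold Rdiv; rewrite Rmult_assoc, Rinv_l, Rmult_1_r by nra.
    pose proof (pow2_ge_0 (m * exp (- y) - (1 - m))). unfold D. nra. }
  lra.
Qed.
Lemma F_nonneg x : 0 <= x -> 0 <= F x.
Proof.
  intros Hx. replace 0 with (F 0) at 1.
  2:{ unfold F, D. rewrite Ropp_0, exp_0. replace (1 - m + m * 1) with 1 by ring. rewrite ln_1. lra. }
  apply (mono_deriv F _ F_der); try lra. apply F1_nonneg.
Qed.
End H.

Lemma hoeff_bern m eta : 0 <= m <= 1 -> 0 <= eta ->
  ln (1 - m + m * exp (- eta)) <= - eta * m + eta * eta / 8.
Proof. intros Hm He. pose proof (F_nonneg m Hm eta He). unfold F, D in H. lra. Qed.

Lemma exp_le' x y : x <= y -> exp x <= exp y.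
Proof. intros H. destruct (Rle_lt_or_eq_dec _ _ H). left; apply exp_increasing; auto. subst; lra. Qed.

Lemma Z_bound d eta p l : 0 <= eta -> (forall i, (i<d)%nat -> 0 <= p i) -> rsum d p = 1 ->
  (forall i, (i<d)%nat -> 0 <= l i <= 1) ->
  0 < rsum d (fun i => p i * exp (- eta * l i)) /\
  ln (rsum d (fun i => p i * exp (- eta * l i))) <= - eta * dot d p l + eta * eta / 8.
Proof.
  intros He Hp Hs Hl.
  assert (Hlow : rsum d (fun i => p i * exp (- eta)) <= rsum d (fun i => p i * exp (- eta * l i))).
  { apply rsum_le; intros i Hi. apply Rmult_le_compat_l. auto. apply exp_le'.
    pose proof (Hl i Hi). nra. }
  rewrite (rsum_ext _ _ (fun i => exp (- eta) * p i)) in Hlow by (intros; ring).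
  rewrite rsum_scal, Hs in Hlow. pose proof (exp_pos (- eta)).
  set (m := dot d p l).
  assert (Hm0 : 0 <= m) by (apply rsum_nonneg; intros i Hi; pose proof (Hp i Hi); pose proof (Hl i Hi); nra).
  assert (Hm1 : m <= 1) by (rewrite <- Hs; apply rsum_le; intros i Hi; pose proof (Hp i Hi); pose proof (Hl i Hi); nra).
  assert (Hup : rsum d (fun i => p i * exp (- eta * l i)) <= 1 - m + m * exp (- eta)).
  { apply Rle_trans with (rsum d (fun i => p i - p i * l i + (p i * l i) * exp (- eta))).
    - apply rsum_le; intros i Hi. pose proof (exp_convex (l i) (- eta) (Hl i Hi)).
      pose proof (Hp i Hi). replace (p i - p i * l i + p i * l i * exp (- eta)) with
        (p i * (1 - l i + l i * exp (- eta))) by ring. apply Rmult_le_compat_l; auto.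
    - rewrite rsum_plus, rsum_minus, (rsum_ext _ (fun i => p i * l i * exp (- eta)) (fun i => exp (- eta) * (p i * l i))) by (intros; ring).
      rewrite rsum_scal, Hs. unfold m, dot. lra. }
  split. lra.
  apply Rle_trans with (ln (1 - m + m * exp (- eta))). apply ln_le; lra.
  pose proof (hoeff_bern m eta (conj Hm0 Hm1) He). lra.
Qed.

Lemma ln_le_sub1 y : 0 < y -> ln y <= y - 1.
Proof. intros H. pose proof (exp_ineq1_le (ln y)). rewrite exp_ln in H0; lra. Qed.

Lemma pw_bound y p v : 0 < y -> 0 < p -> 0 < v ->
  y * ln (y / v) <= (y - p) * (y - p) / p + (y - p) + y * ln (p / v).
Proof.
  intros Hy Hp Hv.
  assert (E : ln (y / v) = ln (y / p) + ln (p / v)) by (rewrite !ln_div by lra; ring).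
  rewrite E. pose proof (ln_le_sub1 (y / p) ltac:(apply Rdiv_lt_0_compat; lra)).
  assert (y * ln (y / p) <= y * (y / p - 1)) by (apply Rmult_le_compat_l; lra).
  assert (y * (y / p - 1) = (y - p) * (y - p) / p + (y - p)) by (field; lra).
  lra.
Qed.

Lemma gibbs d p v : (forall i, (i < d)%nat -> 0 < p i) -> (forall i, (i < d)%nat -> 0 < v i) ->
  rsum d p = rsum d v -> 0 <= KL d p v.
Proof.
  intros Hp Hv Hs. unfold KL.
  apply Rle_trans with (rsum d (fun i => p i - v i)).
  - rewrite rsum_minus; lra.
  - apply rsum_le; intros i Hi. pose proof (Hp i Hi); pose proof (Hv i Hi).
    pose proof (ln_le_sub1 (v i / p i) ltac:(apply Rdiv_lt_0_compat; lra)).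
    assert (Eq : ln (p i / v i) = - ln (v i / p i)) by (rewrite !ln_div by lra; ring).
    rewrite Eq.
    assert (p i * ln (v i / p i) <= p i * (v i / p i - 1)) by (apply Rmult_le_compat_l; lra).
    assert (p i * (v i / p i - 1) = v i - p i) by (field; lra). nra.
Qed.

Lemma proj_ineq d alpha v p x : (1 <= d)%nat -> 0 < alpha ->
  (forall i, (i < d)%nat -> 0 < v i) -> rsum d v = 1 ->
  is_KL_projection d alpha v p -> simplex_alpha d alpha x ->
  0 <= rsum d (fun i => x i * ln (p i / v i)).
Proof.
  intros Hd Ha Hv Hsv [[[Hp01 Hsp] Hpa] Hmin] [[Hx01 Hsx] Hxa].
  assert (Had : 0 < alpha / INR d) by (apply Rdiv_lt_0_compat; auto; apply lt_0_INR; lia).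
  assert (Hp : forall i, (i < d)%nat -> 0 < p i) by (intros i Hi; pose proof (Hpa i Hi); lra).
  set (S := rsum d (fun i => (x i - p i) * ln (p i / v i))).
  assert (HS : 0 <= S).
  { destruct (Rlt_le_dec S 0) as [HS|HS]; [exfalso|exact HS].
    set (C := rsum d (fun i => (x i - p i) * (x i - p i) / p i)).
    assert (HC : 0 <= C).
    { apply rsum_nonneg; intros i Hi. pose proof (Hp i Hi). unfold Rdiv.
      apply Rmult_le_pos. pose proof (Rle_0_sqr (x i - p i)); unfold Rsqr in *; lra. left; apply Rinv_0_lt_compat; auto. }
    set (eps := Rmin 1 (- S / (2 * (C + 1)))).
    assert (He1 : eps <= 1) by apply Rmin_l.
    assert (He2 : eps <= - S / (2 * (C + 1))) by apply Rmin_r.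
    assert (He0 : 0 < eps).
    { unfold eps. apply Rmin_glb_lt. lra. apply Rdiv_lt_0_compat; lra. }
    set (y := fun i => p i + eps * (x i - p i)).
    assert (Hy : simplex_alpha d alpha y).
    { split; [split|].
      - intros i Hi. pose proof (Hpa i Hi); pose proof (Hxa i Hi). unfold y.
        assert (0 <= (1 - eps) * (p i - alpha / INR d)) by (apply Rmult_le_pos; lra).
        assert (0 <= eps * (x i - alpha / INR d)) by (apply Rmult_le_pos; lra).
        assert (0 <= (1 - eps) * (1 - p i)) by (apply Rmult_le_pos; lra).
        assert (0 <= eps * (1 - x i)) by (apply Rmult_le_pos; lra).
        split; nra.
      - unfold y. rewrite rsum_plus, rsum_scal, rsum_minus, Hsx, Hsp. ring.
      - intros i Hi. pose proof (Hpa i Hi); pose proof (Hxa i Hi). unfold y.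
        assert (0 <= (1 - eps) * (p i - alpha / INR d)) by (apply Rmult_le_pos; lra).
        assert (0 <= eps * (x i - alpha / INR d)) by (apply Rmult_le_pos; lra).
        assert (0 <= (1 - eps) * (1 - p i)) by (apply Rmult_le_pos; lra).
        assert (0 <= eps * (1 - x i)) by (apply Rmult_le_pos; lra).
        split; nra. }
    pose proof (Hmin y Hy) as Hm.
    assert (Hk : KL d y v <= eps * eps * C + eps * (rsum d x - rsum d p) + KL d p v + eps * S).
    { unfold KL. apply Rle_trans with (rsum d (fun i =>
        eps * eps * ((x i - p i) * (x i - p i) / p i) + eps * (x i - p i) +
        (p i * ln (p i / v i) + eps * ((x i - p i) * ln (p i / v i))))).
      - apply rsum_le; intros i Hi.
        assert (0 < y i) by (destruct Hy as [_ Hy]; pose proof (Hy i Hi); lra).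
        pose proof (pw_bound (y i) (p i) (v i) H (Hp i Hi) (Hv i Hi)).
        pose proof (Hp i Hi).
        replace (eps * eps * ((x i - p i) * (x i - p i) / p i) + eps * (x i - p i) +
          (p i * ln (p i / v i) + eps * ((x i - p i) * ln (p i / v i)))) with
          ((y i - p i) * (y i - p i) / p i + (y i - p i) + y i * ln (p i / v i)).
        exact H0. unfold y. field. lra.
      - rewrite !rsum_plus, !rsum_scal, rsum_minus. unfold C, S. lra. }
    rewrite Hsx, Hsp in Hk.
    assert (eps * (C + 1) <= - S / 2).
    { apply Rle_trans with (- S / (2 * (C + 1)) * (C + 1)).
      apply Rmult_le_compat_r; lra. right; field; lra. }
    assert (eps * eps * C <= eps * (- S / 2)) by nra.
    nra. }
  apply Rle_trans with (S + KL d p v).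
  - pose proof (gibbs d p v Hp Hv ltac:(lra)). lra.
  - right. unfold S, KL. rewrite <- rsum_plus. apply rsum_ext; intros; ring.
Qed.

Definition CE d (w x : nat -> R) := rsum d (fun i => w i * - ln (x i)).
Definition wmix d alpha (ut : nat -> R) : nat -> R :=
  fun i => (1 - alpha) * ut i + alpha * norm1 d ut / INR d.

Lemma norm1_eq d ut : (forall i, (i < d)%nat -> 0 <= ut i) -> norm1 d ut = rsum d ut.
Proof. intros H. unfold norm1. apply rsum_ext; intros. apply Rabs_pos_eq; auto. Qed.

Lemma norm1_nonneg d ut : 0 <= norm1 d ut.
Proof. apply rsum_nonneg; intros; apply Rabs_pos. Qed.

Lemma wmix_sum d alpha ut : (1 <= d)%nat -> (forall i, (i < d)%nat -> 0 <= ut i) ->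
  rsum d (wmix d alpha ut) = norm1 d ut.
Proof.
  intros Hd Hu. unfold wmix. rewrite rsum_plus, rsum_scal, rsum_const, <- norm1_eq by auto.
  assert (0 < INR d) by (apply lt_0_INR; lia). field. lra.
Qed.

Lemma preweight_props d eta pt lt : (1 <= d)%nat -> 0 <= eta ->
  (forall i, (i < d)%nat -> 0 < pt i) -> rsum d pt = 1 ->
  (forall i, (i < d)%nat -> 0 <= lt i <= 1) ->
  (forall i, (i < d)%nat -> 0 < preweight d eta pt lt i <= 1) /\ rsum d (preweight d eta pt lt) = 1.
Proof.
  intros Hd He Hp Hs Hl.
  destruct (Z_bound d eta pt lt He ltac:(intros; left; auto) Hs Hl) as [HZ _].
  set (Z := rsum d (fun i => pt i * exp (- eta * lt i))) in *.
  assert (Hsum : rsum d (preweight d eta pt lt) = 1).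
  { unfold preweight. fold Z. rewrite (rsum_ext _ _ (fun i => / Z * (pt i * exp (- eta * lt i))))
      by (intros; unfold Rdiv; ring). rewrite rsum_scal. fold Z. field. lra. }
  assert (Hpos : forall i, (i < d)%nat -> 0 < preweight d eta pt lt i).
  { intros i Hi. unfold preweight. fold Z. apply Rdiv_lt_0_compat; auto.
    apply Rmult_lt_0_compat; auto. apply exp_pos. }
  split; auto. intros i Hi. split; auto. rewrite <- Hsum.
  apply (rsum_le_elem d (preweight d eta pt lt) i); auto. intros; left; auto.
Qed.

Lemma round d alpha eta pt lt ut : (1 <= d)%nat -> 0 < alpha < 1 -> 0 < eta ->
  (forall i, (i < d)%nat -> 0 < pt i) -> rsum d pt = 1 ->
  (forall i, (i < d)%nat -> 0 <= lt i <= 1) ->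
  (forall i, (i < d)%nat -> 0 <= ut i) ->
  norm1 d ut * dot d pt lt - dot d ut lt <=
  (CE d (wmix d alpha ut) pt - CE d (wmix d alpha ut) (preweight d eta pt lt)) / eta
  + (eta / 8 + alpha) * norm1 d ut.
Proof.
  intros Hd Ha He Hp Hs Hl Hu.
  destruct (Z_bound d eta pt lt ltac:(lra) ltac:(intros; left; auto) Hs Hl) as [HZ HlnZ].
  set (Z := rsum d (fun i => pt i * exp (- eta * lt i))) in *.
  set (N := norm1 d ut). set (w := wmix d alpha ut).
  assert (HN : 0 <= N) by apply norm1_nonneg.
  assert (Hws : rsum d w = N) by (apply wmix_sum; auto).
  assert (HCE : CE d w pt - CE d w (preweight d eta pt lt) = - eta * rsum d (fun i => w i * lt i) - ln Z * N).
  { unfold CE. rewrite <- rsum_minus, <- Hws, <- rsum_scal.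
    rewrite (rsum_ext _ _ (fun i => - eta * (w i * lt i) + - ln Z * w i)).
    - rewrite rsum_plus, rsum_scal, rsum_scal. ring.
    - intros i Hi. unfold preweight. fold Z. pose proof (Hp i Hi). pose proof (exp_pos (- eta * lt i)).
      rewrite ln_div, ln_mult, ln_exp by (try apply Rmult_lt_0_compat; auto). ring. }
  assert (Hwl : rsum d (fun i => w i * lt i) = (1 - alpha) * dot d ut lt + alpha * N / INR d * rsum d lt).
  { unfold w, wmix, dot. fold N. rewrite <- !rsum_scal, <- rsum_plus. apply rsum_ext; intros; ring. }
  assert (Hsl : rsum d lt <= INR d).
  { rewrite <- (Rmult_1_r (INR d)), <- rsum_const. apply rsum_le. intros i Hi; apply Hl; auto. }
  assert (HdR : 0 < INR d) by (apply lt_0_INR; lia).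
  assert (Hul : 0 <= dot d ut lt) by (apply rsum_nonneg; intros i Hi; pose proof (Hu i Hi); pose proof (Hl i Hi); nra).
  assert (H1 : alpha * N / INR d * rsum d lt <= alpha * N).
  { apply Rle_trans with (alpha * N / INR d * INR d). apply Rmult_le_compat_l; auto.
    apply Rmult_le_pos. apply Rmult_le_pos; lra. left; apply Rinv_0_lt_compat; auto.
    right; field; lra. }
  rewrite HCE.
  assert (H2 : ln Z * N <= (- eta * dot d pt lt + eta * eta / 8) * N) by (apply Rmult_le_compat_r; auto).
  assert (E : (- eta * rsum d (fun i => w i * lt i) - ln Z * N) / eta =
     - rsum d (fun i => w i * lt i) - ln Z * N / eta) by (field; lra).
  rewrite E.
  assert (H3 : ln Z * N / eta <= (- eta * dot d pt lt + eta * eta / 8) * N / eta).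
  { unfold Rdiv. apply Rmult_le_compat_r; auto. left; apply Rinv_0_lt_compat; auto. }
  assert (E2 : (- eta * dot d pt lt + eta * eta / 8) * N / eta = - N * dot d pt lt + eta * N / 8) by (field; lra).
  rewrite E2 in H3. rewrite Hwl. nra.
Qed.

Lemma proj_step d alpha ut v p' : (1 <= d)%nat -> 0 < alpha < 1 ->
  (forall i, (i < d)%nat -> 0 <= ut i) ->
  (forall i, (i < d)%nat -> 0 < v i) -> rsum d v = 1 ->
  is_KL_projection d alpha v p' ->
  CE d (wmix d alpha ut) p' <= CE d (wmix d alpha ut) v.
Proof.
  intros Hd Ha Hu Hv Hsv Hpr.
  assert (HdR : 0 < INR d) by (apply lt_0_INR; lia).
  assert (Hp' : forall i, (i < d)%nat -> 0 < p' i).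
  { intros i Hi. destruct Hpr as [[_ H] _]. pose proof (H i Hi).
    assert (0 < alpha / INR d) by (apply Rdiv_lt_0_compat; lra). lra. }
  set (w := wmix d alpha ut). set (N := norm1 d ut).
  assert (HN : N = rsum d ut) by (apply norm1_eq; auto).
  assert (E : CE d w v - CE d w p' = rsum d (fun i => w i * ln (p' i / v i))).
  { unfold CE. rewrite <- rsum_minus. apply rsum_ext; intros i Hi.
    rewrite ln_div by auto. ring. }
  assert (0 <= rsum d (fun i => w i * ln (p' i / v i))); [|lra].
  assert (HN0 : 0 <= N) by apply norm1_nonneg.
  destruct (Rle_lt_or_eq_dec _ _ HN0) as [HNp|HN0'].
  - set (x := fun i => w i / N).
    assert (Hx : simplex_alpha d alpha x).
    { assert (Hxi : forall i, (i < d)%nat -> alpha / INR d <= x i <= 1).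
      { intros i Hi. pose proof (Hu i Hi).
        assert (ut i <= N) by (rewrite HN; apply rsum_le_elem; auto).
        unfold x, w, wmix. fold N.
        replace (((1 - alpha) * ut i + alpha * N / INR d) / N) with
          ((1 - alpha) * (ut i / N) + alpha / INR d) by (field; lra).
        assert (0 <= ut i / N <= 1).
        { split. apply Rdiv_le_0_compat; lra. apply (Rmult_le_reg_r N); auto.
          unfold Rdiv; rewrite Rmult_assoc, Rinv_l; lra. }
        assert (alpha / INR d <= alpha).
        { unfold Rdiv. rewrite <- (Rmult_1_r alpha) at 2. apply Rmult_le_compat_l. lra.
          rewrite <- Rinv_1. apply Rinv_le_contravar. lra.
          replace 1 with (INR 1) by reflexivity. apply le_INR; auto. }
        assert (0 <= (1 - alpha) * (ut i / N)) by (apply Rmult_le_pos; lra).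
        assert ((1 - alpha) * (ut i / N) <= 1 - alpha) by nra.
        split; lra. }
      split; [split|]; auto.
      - intros i Hi. pose proof (Hxi i Hi). assert (0 < alpha / INR d) by (apply Rdiv_lt_0_compat; lra). lra.
      - unfold x. rewrite (rsum_ext _ _ (fun i => / N * w i)) by (intros; unfold Rdiv; ring).
        rewrite rsum_scal. unfold w. rewrite wmix_sum by auto. fold N. field. lra. }
    pose proof (proj_ineq d alpha v p' x Hd ltac:(lra) Hv Hsv Hpr Hx).
    rewrite (rsum_ext _ _ (fun i => N * (x i * ln (p' i / v i)))).
    + rewrite rsum_scal. apply Rmult_le_pos; lra.
    + intros i Hi. unfold x. field. lra.
  - right. rewrite <- (Rmult_0_r (INR d)), <- rsum_const. apply rsum_ext; intros i Hi.
    pose proof (Hu i Hi). assert (ut i <= N) by (rewrite HN; apply rsum_le_elem; auto).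
    assert (ut i = 0) by lra. unfold w, wmix. fold N. rewrite H1, <- HN0'. field. lra.
Qed.

Lemma DTV_max d a b : DTV d a b = rsum d (fun i => Rmax 0 (a i - b i)).
Proof.
  unfold DTV. apply rsum_ext; intros i Hi. destruct (Rle_dec (b i) (a i)).
  rewrite Rmax_right; lra. rewrite Rmax_left; lra.
Qed.

Lemma shift_step d alpha pt u' u : (1 <= d)%nat -> 0 < alpha < 1 ->
  simplex_alpha d alpha pt ->
  (forall i, (i < d)%nat -> 0 <= u' i) -> (forall i, (i < d)%nat -> 0 <= u i) ->
  CE d (wmix d alpha u') pt - CE d (wmix d alpha u) pt <= ln (INR d / alpha) * DTV d u' u.
Proof.
  intros Hd Ha [_ Hpa] Hu' Hu.
  assert (HdR : 1 <= INR d) by (replace 1 with (INR 1) by reflexivity; apply le_INR; auto).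
  set (L := ln (INR d / alpha)).
  assert (HL : 0 <= L).
  { unfold L. rewrite <- ln_1. apply ln_le. lra. apply (Rmult_le_reg_r alpha). lra.
    unfold Rdiv; rewrite Rmult_assoc, Rinv_l; lra. }
  assert (Hlp : forall i, (i < d)%nat -> 0 <= - ln (pt i) <= L).
  { intros i Hi. pose proof (Hpa i Hi).
    assert (0 < alpha / INR d) by (apply Rdiv_lt_0_compat; lra).
    split.
    - assert (ln (pt i) <= ln 1) by (apply ln_le; lra). rewrite ln_1 in H1. lra.
    - assert (ln (alpha / INR d) <= ln (pt i)) by (apply ln_le; lra).
      unfold L. rewrite ln_div in * by lra. lra. }
  set (N' := norm1 d u'). set (N := norm1 d u).
  assert (HD0 : 0 <= DTV d u' u) by (rewrite DTV_max; apply rsum_nonneg; intros; apply Rmax_l).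
  assert (HND : Rmax 0 (N' - N) <= DTV d u' u).
  { apply Rmax_lub; auto. unfold N', N. rewrite !norm1_eq by auto. rewrite <- rsum_minus, DTV_max.
    apply rsum_le; intros; apply Rmax_r. }
  apply Rle_trans with (rsum d (fun i => L * ((1 - alpha) * Rmax 0 (u' i - u i) + alpha / INR d * Rmax 0 (N' - N)))).
  - unfold CE. rewrite <- rsum_minus. apply rsum_le; intros i Hi.
    pose proof (Hlp i Hi).
    set (df := wmix d alpha u' i - wmix d alpha u i).
    assert (Hdf : df = (1 - alpha) * (u' i - u i) + alpha / INR d * (N' - N)).
    { unfold df, wmix. fold N N'. field. lra. }
    set (M := (1 - alpha) * Rmax 0 (u' i - u i) + alpha / INR d * Rmax 0 (N' - N)).
    assert (Had : 0 <= alpha / INR d) by (apply Rdiv_le_0_compat; lra).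
    pose proof (Rmax_l 0 (u' i - u i)). pose proof (Rmax_r 0 (u' i - u i)).
    pose proof (Rmax_l 0 (N' - N)). pose proof (Rmax_r 0 (N' - N)).
    assert (HM0 : 0 <= M) by (unfold M; apply Rplus_le_le_0_compat; apply Rmult_le_pos; lra).
    assert (HdfM : df <= M).
    { rewrite Hdf. unfold M. apply Rplus_le_compat; apply Rmult_le_compat_l; lra. }
    replace (wmix d alpha u' i * - ln (pt i) - wmix d alpha u i * - ln (pt i)) with (df * - ln (pt i)) by (unfold df; ring).
    apply Rle_trans with (M * - ln (pt i)). apply Rmult_le_compat_r; lra.
    rewrite (Rmult_comm L). apply Rmult_le_compat_l; lra.
  - rewrite rsum_scal. apply Rmult_le_compat_l; auto.
    rewrite rsum_plus, rsum_scal, rsum_const, <- DTV_max.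
    replace (INR d * (alpha / INR d * Rmax 0 (N' - N))) with (alpha * Rmax 0 (N' - N)) by (field; lra).
    nra.
Qed.

Lemma first_step d alpha u1 p1 : (1 <= d)%nat -> (forall i, (i < d)%nat -> 0 <= u1 i) ->
  (forall i, (i < d)%nat -> p1 i = 1 / INR d) ->
  CE d (wmix d alpha u1) p1 = norm1 d u1 * ln (INR d).
Proof.
  intros Hd Hu Hp. assert (HdR : 0 < INR d) by (apply lt_0_INR; lia).
  unfold CE. rewrite (rsum_ext _ _ (fun i => ln (INR d) * wmix d alpha u1 i)).
  - rewrite rsum_scal, wmix_sum by auto. ring.
  - intros i Hi. rewrite Hp by auto. rewrite ln_div, ln_1 by lra. ring.
Qed.

Lemma CE_nonneg d w x : (forall i, (i < d)%nat -> 0 <= w i) -> (forall i, (i < d)%nat -> 0 < x i <= 1) ->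
  0 <= CE d w x.
Proof.
  intros Hw Hx. apply rsum_nonneg; intros i Hi. pose proof (Hx i Hi).
  assert (ln (x i) <= ln 1) by (apply ln_le; lra). rewrite ln_1 in H0.
  apply Rmult_le_pos; auto. lra.
Qed.

Lemma telesc_eq (a b : nat -> R) n :
  rsum (S n) (fun k => a (S k) - b (S k)) = a 1%nat - b (S n) + rsum n (fun k => a (S (S k)) - b (S k)).
Proof. induction n. simpl. ring. cbn [rsum] in *. rewrite IHn. ring. Qed.

Theorem theorem1 (d : nat) (alpha eta : R) (T : nat)
  (p l u : nat -> nat -> R) :
  (1 <= d)%nat -> 0 < alpha < 1 -> 0 < eta -> (1 <= T)%nat ->
  (forall t i, (1 <= t <= T)%nat -> (i < d)%nat -> 0 <= l t i <= 1) ->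
  (forall t i, (1 <= t <= T)%nat -> (i < d)%nat -> 0 <= u t i) ->
  (forall i, (i < d)%nat -> p 1%nat i = 1 / INR d) ->
  (forall t, (1 <= t < T)%nat ->
     is_KL_projection d alpha (preweight d eta (p t) (l t)) (p (S t))) ->
  sumT T (fun t => norm1 d (u t) * dot d (p t) (l t))
    - sumT T (fun t => dot d (u t) (l t))
  <= norm1 d (u 1%nat) * ln (INR d) / eta
     + shifts d T u / eta * ln (INR d / alpha)
     + (eta / 8 + alpha) * sumT T (fun t => norm1 d (u t)).
Proof.
  intros Hd Ha He HT Hl Hu Hp1 Hproj.
  destruct T as [|n]; [lia|].
  assert (HdR : 0 < INR d) by (apply lt_0_INR; lia).
  assert (HdR1 : 1 <= INR d) by (replace 1 with (INR 1) by reflexivity; apply le_INR; auto).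
  assert (HpA : forall t, (1 <= t <= S n)%nat -> simplex_alpha d alpha (p t)).
  { intros t Ht. destruct t as [|t']; [lia|]. destruct t' as [|t''].
    - assert (H01 : 0 <= 1 / INR d <= 1).
      { split. apply Rdiv_le_0_compat; lra. apply (Rmult_le_reg_r (INR d)); auto.
        unfold Rdiv; rewrite Rmult_assoc, Rinv_l; lra. }
      split; [split|].
      + intros i Hi; rewrite Hp1; auto.
      + rewrite (rsum_ext _ _ (fun _ => 1 / INR d)) by auto. rewrite rsum_const. field. lra.
      + intros i Hi; rewrite Hp1 by auto. split; [|lra]. unfold Rdiv.
        apply Rmult_le_compat_r. left; apply Rinv_0_lt_compat; auto. lra.
    - destruct (Hproj (S t'') ltac:(lia)) as [H _]. exact H. }
  assert (Hpp : forall t, (1 <= t <= S n)%nat ->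
     (forall i, (i < d)%nat -> 0 < p t i <= 1) /\ rsum d (p t) = 1).
  { intros t Ht. destruct (HpA t Ht) as [[_ Hs] Hb]. split; auto.
    intros i Hi. pose proof (Hb i Hi). assert (0 < alpha / INR d) by (apply Rdiv_lt_0_compat; lra). lra. }
  assert (Hvp : forall t, (1 <= t <= S n)%nat ->
     (forall i, (i < d)%nat -> 0 < preweight d eta (p t) (l t) i <= 1) /\
     rsum d (preweight d eta (p t) (l t)) = 1).
  { intros t Ht. destruct (Hpp t Ht) as [H1 H2]. apply preweight_props; [auto|lra|intros i Hi; apply H1; auto|auto|intros i Hi; apply Hl; auto]. }
  set (a := fun t => CE d (wmix d alpha (u t)) (p t)).
  set (b := fun t => CE d (wmix d alpha (u t)) (preweight d eta (p t) (l t))).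
  set (L := ln (INR d / alpha)).
  set (SN := sumT (S n) (fun t => norm1 d (u t))).
  assert (Step1 : sumT (S n) (fun t => norm1 d (u t) * dot d (p t) (l t)) - sumT (S n) (fun t => dot d (u t) (l t))
     <= / eta * rsum (S n) (fun k => a (S k) - b (S k)) + (eta / 8 + alpha) * SN).
  { unfold SN, sumT. rewrite <- rsum_scal, <- rsum_scal, <- rsum_minus, <- rsum_plus.
    apply rsum_le; intros k Hk.
    destruct (Hpp (S k) ltac:(lia)) as [H1 H2].
    pose proof (round d alpha eta (p (S k)) (l (S k)) (u (S k)) Hd Ha He
      ltac:(intros i Hi; apply H1; auto) H2 ltac:(intros i Hi; apply Hl; auto; lia)
      ltac:(intros i Hi; apply Hu; auto; lia)).
    unfold a, b. unfold Rdiv in H. lra. }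
  assert (Step2 : rsum (S n) (fun k => a (S k) - b (S k)) <= a 1%nat + L * shifts d (S n) u).
  { rewrite telesc_eq. unfold shifts. replace (S n - 1)%nat with n by lia.
    assert (Hb : 0 <= b (S n)).
    { unfold b. apply CE_nonneg.
      - intros i Hi. unfold wmix. pose proof (Hu (S n) i ltac:(lia) Hi).
        pose proof (norm1_nonneg d (u (S n))).
        assert (0 <= alpha * norm1 d (u (S n)) / INR d) by (apply Rdiv_le_0_compat; nra). nra.
      - apply Hvp; lia. }
    assert (Hr : rsum n (fun k => a (S (S k)) - b (S k)) <= rsum n (fun k => L * DTV d (u (k + 2)%nat) (u (k + 1)%nat))).
    { apply rsum_le; intros k Hk.
      replace (k + 2)%nat with (S (S k)) by lia. replace (k + 1)%nat with (S k) by lia.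
      destruct (Hvp (S k) ltac:(lia)) as [Hv1 Hv2].
      assert (Hb1 : CE d (wmix d alpha (u (S k))) (p (S (S k))) <= b (S k)).
      { unfold b. apply proj_step; auto.
        - intros i Hi; apply Hu; auto; lia.
        - intros i Hi; apply Hv1; auto.
        - apply Hproj; lia. }
      pose proof (shift_step d alpha (p (S (S k))) (u (S (S k))) (u (S k)) Hd Ha
        (HpA (S (S k)) ltac:(lia)) ltac:(intros i Hi; apply Hu; auto; lia)
        ltac:(intros i Hi; apply Hu; auto; lia)).
      unfold a. fold L in H. lra. }
    rewrite rsum_scal in Hr. lra. }
  assert (Ha1 : a 1%nat = norm1 d (u 1%nat) * ln (INR d)).
  { unfold a. apply first_step; auto; intros i Hi; apply Hu; auto; lia. }
  rewrite Ha1 in Step2.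
  assert (/ eta * rsum (S n) (fun k => a (S k) - b (S k)) <= / eta * (norm1 d (u 1%nat) * ln (INR d) + L * shifts d (S n) u)).
  { apply Rmult_le_compat_l; auto. left; apply Rinv_0_lt_compat; auto. }
  replace (norm1 d (u 1%nat) * ln (INR d) / eta + shifts d (S n) u / eta * ln (INR d / alpha))
    with (/ eta * (norm1 d (u 1%nat) * ln (INR d) + L * shifts d (S n) u)) by (unfold L; field; lra).
  lra.
Qed.
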